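(* Consider a discounted Markov decision problem as described in the context, and let $\rho,\mu\in\Delta(\mathcal{S})$. Suppose $V_\mu$ is $L$-smooth on $\Pi$, i.e. $\|\nabla V_\mu(\pi)-\nabla V_\mu(\pi')\|_2\le L\|\pi-\pi'\|_2$ for all $\pi,\pi'\in\Pi$, for some $L>0$. Define, for $\pi\in\Pi$, \[ T_L(\pi)=\mathrm{proj}_\Pi\Bigl(\pi-\frac1L\nabla V_\mu(\pi)\Bigr),\qquad G_L(\pi)=L\bigl(\pi-T_L(\pi)\bigr). \] Then for all $\pi\in\Pi$, \[ V_\rho\bigl(T_L(\pi)\bigr)-V_\rho^\star\le\frac{2\sqrt{2|\mathcal{S}|}}{1-\gamma}\left\|\frac{d_\rho(\pi^\star)}{\mu}\right\|_\infty\|G_L(\pi)\|_2 . \]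
   Context: A discounted Markov decision problem (in cost-minimization form) consists of a finite state set $\mathcal{S}$, a finite action set $\mathcal{A}$, transition probabilities $P(s'|s,a)$, a cost function $R:\mathcal{S}\times\mathcal{A}\to[0,1]$ (written $R_{s,a}$), and a discount factor $\gamma\in[0,1)$. Policies: $\Pi=\Delta(\mathcal{A})^{|\mathcal{S}|}\subset\mathbf{R}^{|\mathcal{S}|\times|\mathcal{A}|}$, $\pi_{s,a}$ the probability of action $a$ at state $s$. $V_s(\pi)=\mathbf{E}\bigl[\sum_{t\ge0}\gamma^tR(s_t,a_t)\mid s_0=s\bigr]$ with $a_t\sim\pi_{s_t}$, $s_{t+1}\sim P(\cdot|s_t,a_t)$; $V_\rho(\pi)=\sum_s\rho_sV_s(\pi)$, $V^\star_\rho=\min_{\pi\in\Pi}V_\rho(\pi)$; $\pi^\star$ denotes a policy minimizing $V_s$ simultaneously for all $s$. $Q_{s,a}(\pi)=R_{s,a}+\gamma\sum_{s'}P(s'|s,a)V_{s'}(\pi)$. Discounted state visitation: $d_{s,s'}(\pi)=(1-\gamma)\sum_{t\ge0}\gamma^t\Pr^\pi(s_t=s'\mid s_0=s)$, $d_{\rho,s'}(\pi)=\sum_s\rho_sd_{s,s'}(\pi)$. The policy gradient $\nabla V_\mu(\pi)$ has entries $\frac1{1-\gamma}d_{\mu,s}(\pi)Q_{s,a}(\pi)$. For $p,q\in\Delta(\mathcal{S})$, $\|p/q\|_\infty=\max_sp_s/q_s$ with $0/0=1$. $\mathrm{proj}_\Pi$ denotes Euclidean projection onto $\Pi$. *)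

(* Defs.v *)
From HB Require Import structures.
From mathcomp Require Import all_boot all_order all_algebra.
From mathcomp Require Import all_classical all_reals all_analysis.
Set Implicit Arguments. Unset Strict Implicit. Unset Printing Implicit Defensive.
Import Order.TTheory GRing.Theory Num.Theory.
Local Open Scope ring_scope.
Local Open Scope classical_set_scope.

Section MDP.
Variables (R : realType) (S A : finType).

Definition is_distr (p : S -> R) : Prop :=
  (forall s, 0 <= p s) /\ \sum_(s : S) p s = 1.

Definition is_policy (pi : S -> A -> R) : Prop :=
  forall s, (forall a, 0 <= pi s a) /\ \sum_(a : A) pi s a = 1.

Definition norm2 (x : S -> A -> R) : R :=
  Num.sqrt (\sum_(s : S) \sum_(a : A) x s a ^+ 2).

Variables (P : S -> A -> S -> R) (Rc : S -> A -> R) (gamma : R).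

Fixpoint prob_t (pi : S -> A -> R) (t : nat) (s s' : S) : R :=
  match t with
  | 0 => if s == s' then 1 else 0
  | t'.+1 => \sum_(s'' : S) prob_t pi t' s s'' *
                 \sum_(a : A) pi s'' a * P s'' a s'
  end.

Definition V (pi : S -> A -> R) (s : S) : R :=
  \big[+%R/0%R]_(0 <= t <oo) (gamma ^+ t *
     \sum_(s' : S) prob_t pi t s s' * \sum_(a : A) pi s' a * Rc s' a).

Definition Vrho (rho : S -> R) (pi : S -> A -> R) : R :=
  \sum_(s : S) rho s * V pi s.

Definition Vstar (rho : S -> R) : R :=
  inf [set Vrho rho pi | pi in is_policy].

Definition Q (pi : S -> A -> R) (s : S) (a : A) : R :=
  Rc s a + gamma * \sum_(s' : S) P s a s' * V pi s'.

Definition dvis (pi : S -> A -> R) (s s' : S) : R :=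
  (1 - gamma) * \big[+%R/0%R]_(0 <= t <oo) (gamma ^+ t * prob_t pi t s s').

Definition drho (rho : S -> R) (pi : S -> A -> R) (s' : S) : R :=
  \sum_(s : S) rho s * dvis pi s s'.

Definition gradV (mu : S -> R) (pi : S -> A -> R) (s : S) (a : A) : R :=
  (1 - gamma)^-1 * drho mu pi s * Q pi s a.

End MDP.

Definition is_proj_Pi (R : realType) (S A : finType)
  (x p : S -> A -> R) : Prop :=
  is_policy p /\ forall q, is_policy q -> norm2 (fun s a => x s a - p s a)
                                          <= norm2 (fun s a => x s a - q s a).

(* || p / q ||_inf with the convention 0/0 = 1 and c/0 = +oo for c > 0 *)
Definition ratio_inf (R : realType) (S : finType) (p q : S -> R) : \bar R :=
  \big[maxe/-oo%E]_(s : S)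
     (if q s == 0 then (if p s == 0 then 1%E else +oo%E) else (p s / q s)%:E).

(* Main.v *)
Require Import Defs.
From HB Require Import structures.
From mathcomp Require Import all_boot all_order all_algebra.
From mathcomp Require Import all_classical all_reals all_analysis.
From mathcomp Require Import ring lra.
Import Order.TTheory GRing.Theory Num.Theory.
Local Open Scope ring_scope.
Import numFieldNormedType.Exports.
Set Implicit Arguments. Unset Strict Implicit. Unset Printing Implicit Defensive.


Lemma cvgn_cst (R:realType) (k:R) : cvgn (fun _ : nat => k).
Proof. apply/cvg_ex; exists k; exact: cvg_cst. Qed.
Lemma limn_cst (R:realType) (k:R) : limn (fun _ : nat => k) = k.
Proof. apply: cvg_lim => //; exact: cvg_cst. Qed.

Definition Ls (R : realType) (g : R) (c : nat -> R) : R :=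
  limn (fun n => \sum_(0 <= t < n) (g ^+ t * c t)).


Lemma Ls_cvg (R : realType) (g : R) (c : nat -> R) (M : R) :
  0 <= g < 1 -> (forall t, `|c t| <= M) -> cvgn (fun n => \sum_(0 <= t < n) (g ^+ t * c t)).
Proof.
move=> /andP[g0 g1] cM.
have M0 : 0 <= M by apply: le_trans (cM 0%N).

apply: (@normed_cvg R R (fun t => g ^+ t * c t)).
apply: (@series_le_cvg _ _ (geometric M g)).
- by move=> n; rewrite normr_ge0.
- by move=> n; rewrite /geometric /= mulr_ge0 // exprn_ge0.
- move=> n; rewrite /geometric /= normrM ger0_norm ?exprn_ge0 // mulrC.
  by rewrite ler_wpM2r // exprn_ge0.
- by apply: is_cvg_geometric_series; rewrite ger0_norm.
Qed.

Definition bnd (R : realType) (c : nat -> R) := exists M, forall t, `|c t| <= M.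

Lemma bnd_cvg (R : realType) (g : R) c : 0 <= g < 1 -> bnd c ->
  cvgn (fun n => \sum_(0 <= t < n) (g ^+ t * c t)).
Proof. by move=> hg [M hM]; apply: Ls_cvg hM. Qed.

Lemma bndD (R : realType) (c1 c2 : nat -> R) : bnd c1 -> bnd c2 -> bnd (fun t => c1 t + c2 t).
Proof.
move=> [M1 h1] [M2 h2]; exists (M1 + M2) => t.
by apply: le_trans (ler_normD _ _) _; apply: lerD.
Qed.

Lemma bndZ (R : realType) (k : R) (c : nat -> R) : bnd c -> bnd (fun t => k * c t).
Proof.
move=> [M h]; exists (`|k| * M) => t.
by rewrite normrM ler_wpM2l.
Qed.

Lemma bnd_sum (R : realType) (I : Type) (r : seq I) (F : I -> nat -> R) :
  (forall i, bnd (F i)) -> bnd (fun t => \sum_(i <- r) F i t).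
Proof.
move=> hF; elim: r => [|i r IH].
  by exists 0 => t; rewrite big_nil normr0.
have -> : (fun t => \sum_(j <- i :: r) F j t) = (fun t => F i t + \sum_(j <- r) F j t).
  by apply/funext => t; rewrite big_cons.
exact: bndD.
Qed.

Lemma Ls_add (R : realType) (g : R) c1 c2 : 0 <= g < 1 -> bnd c1 -> bnd c2 ->
  Ls g (fun t => c1 t + c2 t) = Ls g c1 + Ls g c2.
Proof.
move=> hg b1 b2; rewrite /Ls.
have -> : (fun n => \sum_(0 <= t < n) (g ^+ t * (c1 t + c2 t))) =
  (fun n => \sum_(0 <= t < n) (g ^+ t * c1 t)) + (fun n => \sum_(0 <= t < n) (g ^+ t * c2 t)).
  apply/funext => n.
  transitivity (\sum_(0 <= t < n) (g ^+ t * c1 t) + \sum_(0 <= t < n) (g ^+ t * c2 t)); last by [].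
  by rewrite -big_split; apply: eq_bigr => t _; rewrite mulrDr.
by rewrite limD //; apply: bnd_cvg.
Qed.

Lemma Ls_scale (R : realType) (g : R) (k : R) c : 0 <= g < 1 -> bnd c ->
  Ls g (fun t => k * c t) = k * Ls g c.
Proof.
move=> hg b; rewrite /Ls.
have -> : (fun n => \sum_(0 <= t < n) (g ^+ t * (k * c t))) =
  (fun n => k * \sum_(0 <= t < n) (g ^+ t * c t)).
  by apply/funext => n /=; rewrite mulr_sumr; apply: eq_bigr => t _; rewrite mulrCA.
rewrite limM //; last exact: bnd_cvg.
  by rewrite limn_cst.
exact: cvgn_cst.
Qed.

Lemma Ls_sum (R : realType) (g : R) (I : Type) (r : seq I) (F : I -> nat -> R) :
  0 <= g < 1 -> (forall i, bnd (F i)) ->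
  Ls g (fun t => \sum_(i <- r) F i t) = \sum_(i <- r) Ls g (F i).
Proof.
move=> hg hF; elim: r => [|i r IH].
  rewrite big_nil /Ls.
  have -> : (fun n => \sum_(0 <= t < n) (g ^+ t * \sum_(i <- [::]) F i t)) = (fun _ => 0).
    by apply/funext => n; apply: big1 => t _; rewrite big_nil mulr0.
  by rewrite limn_cst.
rewrite big_cons -IH -Ls_add //; last exact: bnd_sum.
by congr Ls; apply/funext => t; rewrite big_cons.
Qed.

Lemma Ls_ge0 (R : realType) (g : R) c : 0 <= g < 1 -> bnd c -> (forall t, 0 <= c t) ->
  0 <= Ls g c.
Proof.
move=> hg b h; rewrite /Ls; apply: limr_ge; first exact: bnd_cvg.
near=> n; apply: sumr_ge0 => t _; apply: mulr_ge0 => //.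
by case/andP: hg => g0 _; rewrite exprn_ge0.
Unshelve. all: by end_near.
Qed.

Lemma Ls_shift (R : realType) (g : R) c : 0 <= g < 1 -> bnd c ->
  Ls g c = c 0%N + g * Ls g (fun t => c t.+1).
Proof.
move=> hg b; rewrite /Ls.
set s := (fun n => \sum_(0 <= t < n) (g ^+ t * c t)).
have b' : bnd (fun t => c t.+1) by case: b => M hM; exists M.
have cs : cvgn s by exact: bnd_cvg.
have cs' := bnd_cvg hg b'.
have E : limn (fun n => s n.+1) = limn s.
  apply: cvg_lim => //; rewrite cvg_shiftS; exact: cs.
rewrite -E.
have -> : (fun n => s n.+1) = (fun n => c 0%N + g * \sum_(0 <= t < n) (g ^+ t * c t.+1)).
  apply/funext => n; rewrite /s big_nat_recl // expr0 mul1r; congr (_ + _).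
  by rewrite mulr_sumr; apply: eq_bigr => t _; rewrite exprS mulrA.
apply: cvg_lim => //; apply: cvgD; first exact: cvg_cst.
apply: cvgM; [exact: cvg_cst| exact: cs'].
Qed.


Definition Pp (R : realType) (S A : finType) (P : S -> A -> S -> R) (pi : S -> A -> R) s s' :=
  \sum_(a : A) pi s a * P s a s'.

Lemma prob_tS (R : realType) (S A : finType) (P : S -> A -> S -> R) pi t s s' :
  prob_t P pi t.+1 s s' = \sum_(u : S) prob_t P pi t s u * Pp P pi u s'.
Proof. by []. Qed.

Lemma Pp_ge0 (R : realType) (S A : finType) (P : S -> A -> S -> R) pi :
  (forall s a, is_distr (P s a)) -> is_policy pi -> forall s s', 0 <= Pp P pi s s'.
Proof.
move=> hP hpi s s'; apply: sumr_ge0 => a _; apply: mulr_ge0.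
  by case: (hpi s) => h _; exact: h.
by case: (hP s a) => h _; exact: h.
Qed.

Lemma Pp_sum (R : realType) (S A : finType) (P : S -> A -> S -> R) pi :
  (forall s a, is_distr (P s a)) -> is_policy pi -> forall s, \sum_(s' : S) Pp P pi s s' = 1.
Proof.
move=> hP hpi s; rewrite /Pp exchange_big /=.
rewrite -[RHS](proj2 (hpi s)); apply: eq_bigr => a _.
by rewrite -mulr_sumr (proj2 (hP s a)) mulr1.
Qed.

Lemma prob_t_ge0 (R : realType) (S A : finType) (P : S -> A -> S -> R) pi :
  (forall s a, is_distr (P s a)) -> is_policy pi -> forall t s s', 0 <= prob_t P pi t s s'.
Proof.
move=> hP hpi; elim=> [|t IH] s s' /=; first by case: eqP.
by apply: sumr_ge0 => u _; apply: mulr_ge0 => //; exact: Pp_ge0.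
Qed.

Lemma prob_t_sum (R : realType) (S A : finType) (P : S -> A -> S -> R) pi :
  (forall s a, is_distr (P s a)) -> is_policy pi -> forall t s, \sum_(s' : S) prob_t P pi t s s' = 1.
Proof.
move=> hP hpi; elim=> [|t IH] s.
  by rewrite /= (bigD1 s) //= eqxx [X in _ + X]big1 ?addr0 // => u /negPf; rewrite eq_sym => ->.
under eq_bigr do rewrite prob_tS.
rewrite exchange_big /= -[RHS](IH s); apply: eq_bigr => u _.
by rewrite -mulr_sumr Pp_sum // mulr1.
Qed.

Lemma prob_t_le1 (R : realType) (S A : finType) (P : S -> A -> S -> R) pi :
  (forall s a, is_distr (P s a)) -> is_policy pi -> forall t s s', prob_t P pi t s s' <= 1.
Proof.
move=> hP hpi t s s'; rewrite -(prob_t_sum hP hpi t s) (bigD1 s') //= lerDl.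
by apply: sumr_ge0 => u _; exact: prob_t_ge0.
Qed.

Lemma prob_tSl (R : realType) (S A : finType) (P : S -> A -> S -> R) pi t s s' :
  prob_t P pi t.+1 s s' = \sum_(u : S) Pp P pi s u * prob_t P pi t u s'.
Proof.
elim: t s s' => [|t IH] s s'.
  transitivity (Pp P pi s s').
    rewrite /= (bigD1 s) //= eqxx mul1r [X in _ + X]big1 ?addr0 //.
    by move=> u /negPf; rewrite eq_sym => ->; rewrite mul0r.
  rewrite (bigD1 s') //= eqxx mulr1 [X in _ + X]big1 ?addr0 // => u /negPf ->; by rewrite mulr0.
rewrite prob_tS.
under eq_bigr do rewrite IH mulr_suml.
rewrite exchange_big; apply: eq_bigr => v _.
by rewrite prob_tS mulr_sumr; apply: eq_bigr => u _; rewrite mulrA.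
Qed.

Lemma bnd_prob (R : realType) (S A : finType) (P : S -> A -> S -> R) pi :
  (forall s a, is_distr (P s a)) -> is_policy pi -> forall s s', bnd (fun t => prob_t P pi t s s').
Proof.
move=> hP hpi s s'; exists 1 => t.
by rewrite ger0_norm ?prob_t_le1 ?prob_t_ge0.
Qed.

Lemma bnd_probf (R : realType) (S A : finType) (P : S -> A -> S -> R) pi (f : S -> R) :
  (forall s a, is_distr (P s a)) -> is_policy pi -> forall s,
  bnd (fun t => \sum_(s' : S) prob_t P pi t s s' * f s').
Proof.
move=> hP hpi s; apply: bnd_sum => s'.
have := bndZ (f s') (bnd_prob hP hpi s s').
by case=> M hM; exists M => t; rewrite mulrC.
Qed.

Definition rr (R : realType) (S A : finType) (Rc : S -> A -> R) (pi : S -> A -> R) s :=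
  \sum_(a : A) pi s a * Rc s a.

Lemma V_Ls (R : realType) (S A : finType) P Rc (g : R) (pi : S -> A -> R) s :
  V P Rc g pi s = Ls g (fun t => \sum_(s' : S) prob_t P pi t s s' * rr Rc pi s').
Proof. reflexivity. Qed.

Lemma dvis_Ls (R : realType) (S A : finType) (P : S -> A -> S -> R) (g : R) (pi : S -> A -> R) s s' :
  dvis P g pi s s' = (1 - g) * Ls g (fun t => prob_t P pi t s s').
Proof. reflexivity. Qed.

Lemma sum_delta (R : realType) (S : finType) (s : S) (f : S -> R) :
  \sum_(u : S) (if s == u then 1 else 0) * f u = f s.
Proof.
rewrite (bigD1 s) //= eqxx mul1r [X in _ + X]big1 ?addr0 // => u /negPf.
by rewrite eq_sym => ->; rewrite mul0r.
Qed.

Lemma Bellman (R : realType) (S A : finType) (P : S -> A -> S -> R) Rc (g : R) pi :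
  (forall s a, is_distr (P s a)) -> is_policy pi -> 0 <= g < 1 -> forall s,
  V P Rc g pi s = rr Rc pi s + g * \sum_(u : S) Pp P pi s u * V P Rc g pi u.
Proof.
move=> hP hpi hg s.
rewrite V_Ls (Ls_shift hg (bnd_probf _ hP hpi s)); congr (_ + _).
  by rewrite /= sum_delta.
congr (_ * _).
have -> : (fun t => \sum_(s' : S) prob_t P pi t.+1 s s' * rr Rc pi s') =
   (fun t => \sum_(u : S) Pp P pi s u * (\sum_(s' : S) prob_t P pi t u s' * rr Rc pi s')).
  apply/funext => t; under eq_bigr do rewrite prob_tSl mulr_suml.
  rewrite exchange_big; apply: eq_bigr => u _; rewrite mulr_sumr.
  by apply: eq_bigr => v _; rewrite mulrA.
rewrite Ls_sum //; last first.
  by move=> u; apply: bndZ; apply: bnd_probf.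
apply: eq_bigr => u _; rewrite Ls_scale //; last exact: bnd_probf.
Qed.

Lemma dvis_rec (R : realType) (S A : finType) (P : S -> A -> S -> R) (g : R) pi :
  (forall s a, is_distr (P s a)) -> is_policy pi -> 0 <= g < 1 -> forall s s',
  dvis P g pi s s' = (1 - g) * (if s == s' then 1 else 0)
     + g * \sum_(u : S) dvis P g pi s u * Pp P pi u s'.
Proof.
move=> hP hpi hg s s'.
rewrite dvis_Ls (Ls_shift hg (bnd_prob hP hpi s s')) /=.
have -> : (fun t => prob_t P pi t.+1 s s') =
   (fun t => \sum_(u : S) Pp P pi u s' * prob_t P pi t s u).
  by apply/funext => t; rewrite prob_tS; apply: eq_bigr => u _; rewrite mulrC.
rewrite Ls_sum //; last first.
  by move=> u; apply: bndZ; apply: bnd_prob.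
rewrite mulrDr; congr (_ + _).
rewrite mulrCA; congr (_ * _); rewrite mulr_sumr; apply: eq_bigr => u _.
rewrite (Ls_scale _ hg (bnd_prob hP hpi s u)) dvis_Ls.
by rewrite mulrCA mulrC.
Qed.

Lemma dvis_r (R : realType) (S A : finType) (P : S -> A -> S -> R) Rc (g : R) pi :
  (forall s a, is_distr (P s a)) -> is_policy pi -> 0 <= g < 1 -> forall s,
  \sum_(u : S) dvis P g pi s u * rr Rc pi u = (1 - g) * V P Rc g pi s.
Proof.
move=> hP hpi hg s.
rewrite V_Ls.
have -> : (fun t => \sum_(s' : S) prob_t P pi t s s' * rr Rc pi s') =
   (fun t => \sum_(u : S) rr Rc pi u * prob_t P pi t s u).
  by apply/funext => t; apply: eq_bigr => u _; rewrite mulrC.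
rewrite Ls_sum //; last by move=> u; apply: bndZ; apply: bnd_prob.
rewrite mulr_sumr; apply: eq_bigr => u _.
rewrite (Ls_scale _ hg (bnd_prob hP hpi s u)) dvis_Ls.
by rewrite mulrCA mulrC.
Qed.

Lemma polQ (R : realType) (S A : finType) (P : S -> A -> S -> R) Rc (g : R) (p q : S -> A -> R) u :
  \sum_(a : A) p u a * Q P Rc g q u a =
  rr Rc p u + g * \sum_(v : S) Pp P p u v * V P Rc g q v.
Proof.
rewrite /Q /rr /Pp.
under eq_bigr do rewrite mulrDr.
rewrite big_split /=; congr (_ + _).
transitivity (\sum_(a : A) \sum_(v : S) g * (p u a * P u a v * V P Rc g q v)).
  apply: eq_bigr => a _; rewrite mulrCA mulr_sumr mulr_sumr.
  by apply: eq_bigr => v _; rewrite !mulrA.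
rewrite exchange_big mulr_sumr; apply: eq_bigr => v _.
by rewrite mulr_suml mulr_sumr.
Qed.

Lemma dvis_ge0 (R : realType) (S A : finType) (P : S -> A -> S -> R) (g : R) pi :
  (forall s a, is_distr (P s a)) -> is_policy pi -> 0 <= g < 1 -> forall s s',
  0 <= dvis P g pi s s'.
Proof.
move=> hP hpi hg s s'; rewrite dvis_Ls; apply: mulr_ge0.
  by case/andP: hg => _ g1; rewrite subr_ge0 ltW.
apply: Ls_ge0 => //; first exact: bnd_prob.
by move=> t; apply: prob_t_ge0.
Qed.

Lemma dvis_diag (R : realType) (S A : finType) (P : S -> A -> S -> R) (g : R) pi :
  (forall s a, is_distr (P s a)) -> is_policy pi -> 0 <= g < 1 -> forall s,
  1 - g <= dvis P g pi s s.
Proof.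
move=> hP hpi hg s; rewrite dvis_rec // eqxx mulr1 lerDl.
have g0 : 0 <= g by case/andP: hg.
apply: mulr_ge0 => //; apply: sumr_ge0 => u _.
apply: mulr_ge0; first exact: (dvis_ge0 hP hpi).
exact: (Pp_ge0 hP hpi).
Qed.

Lemma PDL (R : realType) (S A : finType) (P : S -> A -> S -> R) Rc (g : R) (p q : S -> A -> R) :
  (forall s a, is_distr (P s a)) -> is_policy p -> is_policy q -> 0 <= g < 1 -> forall s,
  \sum_(u : S) dvis P g p s u * (\sum_(a : A) (p u a - q u a) * Q P Rc g q u a)
  = (1 - g) * (V P Rc g p s - V P Rc g q s).
Proof.
move=> hP hp hq hg s.
have stepA : forall u, \sum_(a : A) (p u a - q u a) * Q P Rc g q u a =
   rr Rc p u + g * \sum_(v : S) Pp P p u v * V P Rc g q v - V P Rc g q u.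
  move=> u; under eq_bigr do rewrite mulrBl.
  by rewrite sumrB !polQ -Bellman.
under eq_bigr do rewrite stepA mulrBr mulrDr.
rewrite sumrB big_split /= dvis_r //.
have M : \sum_(u : S) dvis P g p s u * (g * \sum_(v : S) Pp P p u v * V P Rc g q v)
   = \sum_(v : S) dvis P g p s v * V P Rc g q v - (1 - g) * V P Rc g q s.
  transitivity (\sum_(v : S) (g * \sum_(u : S) dvis P g p s u * Pp P p u v) * V P Rc g q v).
    transitivity (\sum_(u : S) \sum_(v : S) g * (dvis P g p s u * Pp P p u v * V P Rc g q v)).
      apply: eq_bigr => u _; rewrite mulrCA mulr_sumr mulr_sumr.
      by apply: eq_bigr => v _; rewrite !mulrA.
    rewrite exchange_big; apply: eq_bigr => v _.
    by rewrite mulr_sumr mulr_suml; apply: eq_bigr => u _; rewrite !mulrA.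
  under eq_bigr => v _.
    have -> : g * \sum_(u : S) dvis P g p s u * Pp P p u v =
       dvis P g p s v - (1 - g) * (if s == v then 1 else 0).
      by rewrite [in RHS](dvis_rec hP hp hg s v) addrAC subrr add0r.
    rewrite mulrBl -mulrA.
  over.
  by rewrite sumrB -mulr_sumr sum_delta.
rewrite M; set X := \sum_(v : S) _.
by rewrite mulrBr addrA addrAC addrK.
Qed.


Definition ss (R : realType) (S A : finType) (f : S -> A -> R) := \sum_(s : S) \sum_(a : A) f s a.

Lemma ssD (R : realType) (S A : finType) (f g : S -> A -> R) :
  ss (fun s a => f s a + g s a) = ss f + ss g.
Proof. by rewrite /ss -big_split; apply: eq_bigr => s _; rewrite big_split. Qed.

Lemma ssB (R : realType) (S A : finType) (f g : S -> A -> R) :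
  ss (fun s a => f s a - g s a) = ss f - ss g.
Proof. by rewrite /ss -sumrB; apply: eq_bigr => s _; rewrite sumrB. Qed.

Lemma ssZ (R : realType) (S A : finType) (k : R) (f : S -> A -> R) :
  ss (fun s a => k * f s a) = k * ss f.
Proof. by rewrite /ss mulr_sumr; apply: eq_bigr => s _; rewrite mulr_sumr. Qed.

Lemma ss_le (R : realType) (S A : finType) (f g : S -> A -> R) :
  (forall s a, f s a <= g s a) -> ss f <= ss g.
Proof. by move=> h; apply: ler_sum => s _; apply: ler_sum => a _. Qed.

Lemma ss_ext (R : realType) (S A : finType) (f g : S -> A -> R) :
  (forall s a, f s a = g s a) -> ss f = ss g.
Proof. by move=> h; apply: eq_bigr => s _; apply: eq_bigr => a _. Qed.

Lemma ss_ge0 (R : realType) (S A : finType) (f : S -> A -> R) :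
  (forall s a, 0 <= f s a) -> 0 <= ss f.
Proof. by move=> h; apply: sumr_ge0 => s _; apply: sumr_ge0 => a _. Qed.

Lemma norm2E (R : realType) (S A : finType) (x : S -> A -> R) :
  norm2 x = Num.sqrt (ss (fun s a => x s a ^+ 2)).
Proof. by []. Qed.

Lemma norm2_sq (R : realType) (S A : finType) (x : S -> A -> R) :
  norm2 x ^+ 2 = ss (fun s a => x s a ^+ 2).
Proof. by rewrite norm2E sqr_sqrtr // ss_ge0 // => s a; rewrite sqr_ge0. Qed.

Lemma norm2_ge0 (R : realType) (S A : finType) (x : S -> A -> R) : 0 <= norm2 x.
Proof. exact: sqrtr_ge0. Qed.

Lemma ss_sq_eq0 (R : realType) (S A : finType) (x : S -> A -> R) :
  ss (fun s a => x s a ^+ 2) = 0 -> forall s a, x s a = 0.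
Proof.
rewrite /ss => h s a.
have h1 : \sum_(b : A) x s b ^+ 2 = 0.
  apply: (psumr_eq0P _ h) => // u _; apply: sumr_ge0 => b _; exact: sqr_ge0.
have : x s a ^+ 2 = 0.
  apply: (psumr_eq0P _ h1) => // b _; exact: sqr_ge0.
by move/eqP; rewrite sqrf_eq0 => /eqP.
Qed.

Lemma CS (R : realType) (S A : finType) (x y : S -> A -> R) :
  ss (fun s a => x s a * y s a) <= norm2 x * norm2 y.
Proof.
set a := norm2 x; set b := norm2 y; set Z := ss _.
have a0 : 0 <= a by exact: norm2_ge0.
have b0 : 0 <= b by exact: norm2_ge0.
have H : 0 <= ss (fun s t => (b * x s t - a * y s t) ^+ 2).
  by apply: ss_ge0 => s t; rewrite sqr_ge0.
have E : ss (fun s t => (b * x s t - a * y s t) ^+ 2) =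
   b ^+ 2 * ss (fun s t => x s t ^+ 2) - 2 * a * b * Z + a ^+ 2 * ss (fun s t => y s t ^+ 2).
  rewrite /Z -!ssZ -ssB -ssD; apply: ss_ext => s t; ring.
rewrite E -!norm2_sq -/a -/b in H.
have [ab0|] := eqVneq (a * b) 0.
  move: ab0 => /eqP; rewrite mulf_eq0 => /orP[] /eqP h0.
    have hx : forall s t, x s t = 0.
      by apply: ss_sq_eq0; rewrite -norm2_sq -/a h0 expr0n.
    rewrite /Z (@ss_ext _ _ _ _ (fun _ _ => 0)); last by move=> s t; rewrite hx mul0r.
    by rewrite /ss big1; [exact: mulr_ge0 | move=> s _; rewrite big1].
  have hy : forall s t, y s t = 0.
    by apply: ss_sq_eq0; rewrite -norm2_sq -/b h0 expr0n.
  rewrite /Z (@ss_ext _ _ _ _ (fun _ _ => 0)); last by move=> s t; rewrite hy mulr0.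
  by rewrite /ss big1; [exact: mulr_ge0 | move=> s _; rewrite big1].
move=> abn0.
have abp : 0 < a * b by rewrite lt_def abn0 /=; exact: mulr_ge0.
have : a * b * Z <= a * b * (a * b) by nra.
by rewrite ler_pM2l.
Qed.

Lemma norm2_scale (R : realType) (S A : finType) (k : R) (x : S -> A -> R) :
  norm2 (fun s a => k * x s a) = `|k| * norm2 x.
Proof.
rewrite !norm2E (@ss_ext _ _ _ _ (fun s a => k ^+ 2 * x s a ^+ 2)); last by move=> s a; rewrite exprMn.
by rewrite ssZ sqrtrM ?sqr_ge0 // sqrtr_sqr.
Qed.

Lemma norm2_sym (R : realType) (S A : finType) (x y : S -> A -> R) :
  norm2 (fun s a => x s a - y s a) = norm2 (fun s a => y s a - x s a).
Proof. by rewrite !norm2E; congr Num.sqrt; apply: ss_ext => s a; rewrite -sqrrN opprB. Qed.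

Lemma VI (R : realType) (S A : finType) (x T q : S -> A -> R) :
  is_proj_Pi x T -> is_policy q ->
  ss (fun s a => (x s a - T s a) * (q s a - T s a)) <= 0.
Proof.
move=> [hT hmin] hq.
set Z := ss _; set N := ss (fun s a => (q s a - T s a) ^+ 2).
have N0 : 0 <= N by apply: ss_ge0 => s a; rewrite sqr_ge0.
rewrite leNgt; apply/negP => Zp.
set t := Z / (Z + N).
have ZN : 0 < Z + N by lra.
have t0 : 0 <= t by rewrite divr_ge0 // ltW.
have t1 : t <= 1 by rewrite ler_pdivrMr // mul1r lerDl.
pose qt := fun s a => T s a + t * (q s a - T s a).
have hqt : is_policy qt.
  move=> s; split.
    move=> a; rewrite /qt.
    have := (proj1 (hT s) a); have := (proj1 (hq s) a) => h1 h2.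
    have -> : T s a + t * (q s a - T s a) = (1 - t) * T s a + t * q s a by ring.
    by apply: addr_ge0; apply: mulr_ge0 => //; lra.
  rewrite /qt big_split /= -mulr_sumr sumrB (proj2 (hT s)) (proj2 (hq s)).
  by rewrite subrr mulr0 addr0.
have := hmin qt hqt.
rewrite !norm2E ler_sqrt; last by apply: ss_ge0 => s a; rewrite sqr_ge0.
have -> : ss (fun s a => (x s a - qt s a) ^+ 2) =
   ss (fun s a => (x s a - T s a) ^+ 2) - 2 * t * Z + t ^+ 2 * N.
  by rewrite /Z /N -!ssZ -ssB -ssD; apply: ss_ext => s a; rewrite /qt; ring.
move=> h.
have h2 : 2 * t * Z <= t ^+ 2 * N by lra.
have : 2 * Z * Z <= Z * Z.
  have E1 : 2 * t * Z * (Z + N) = 2 * Z * Z by rewrite /t; field; lra.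
  have E2 : t ^+ 2 * N * (Z + N) = Z * (Z * N) / (Z + N) by rewrite /t; field; lra.
  have h3 : 2 * t * Z * (Z + N) <= t ^+ 2 * N * (Z + N) by rewrite ler_pM2r.
  rewrite E1 E2 in h3.
  have h4 : Z * (Z * N) / (Z + N) <= Z * Z.
    rewrite ler_pdivrMr // !mulrDr.
    have : 0 <= Z * Z * Z by apply: mulr_ge0; [apply: mulr_ge0; lra | lra].
    by move=> ?; lra.
  lra.
nra.
Qed.

Lemma diam (R : realType) (S A : finType) (p q : S -> A -> R) :
  is_policy p -> is_policy q -> norm2 (fun s a => p s a - q s a) <= Num.sqrt (2 * #|S|%:R).
Proof.
move=> hp hq; rewrite norm2E; apply: ler_wsqrtr.
have le1 : forall (r : S -> A -> R), is_policy r -> forall s a, r s a <= 1.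
  move=> r hr s a; rewrite -(proj2 (hr s)) (bigD1 a) //= lerDl.
  by apply: sumr_ge0 => b _; exact: (proj1 (hr s) b).
apply: (@le_trans _ _ (ss (fun s a => p s a + q s a))).
  apply: ss_le => s a.
  have := proj1 (hp s) a; have := proj1 (hq s) a; have := le1 p hp s a; have := le1 q hq s a.
  move=> h1 h2 h3 h4; nra.
rewrite /ss (eq_bigr (fun _ => 2)); last first.
  by move=> s _; rewrite big_split /= (proj2 (hp s)) (proj2 (hq s)).
by rewrite sumr_const mulr_natr.
Qed.

Lemma grad_bound (R : realType) (S A : finType) (F : (S -> A -> R) -> S -> A -> R) (L : R)
  (pi T p : S -> A -> R) :
  0 < L ->
  (forall p p', is_policy p -> is_policy p' ->
     norm2 (fun s a => F p s a - F p' s a) <= L * norm2 (fun s a => p s a - p' s a)) ->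
  is_policy pi -> is_policy p ->
  is_proj_Pi (fun s a => pi s a - L^-1 * F pi s a) T ->
  ss (fun s a => F T s a * (T s a - p s a)) <=
    2 * norm2 (fun s a => L * (pi s a - T s a)) * norm2 (fun s a => T s a - p s a).
Proof.
move=> L0 hL hpi hp hproj.
have hT : is_policy T by case: hproj.
have hvi := VI hproj hp.
set G := norm2 (fun s a => L * (pi s a - T s a)).
set D := norm2 (fun s a => T s a - p s a).
have GE : G = L * norm2 (fun s a => T s a - pi s a).
  by rewrite /G norm2_scale ger0_norm ?ltW // norm2_sym.
have E : ss (fun s a => F T s a * (T s a - p s a)) =
  ss (fun s a => (L * (pi s a - T s a)) * (T s a - p s a))
  + L * ss (fun s a => (pi s a - L^-1 * F pi s a - T s a) * (p s a - T s a))
  + ss (fun s a => (F T s a - F pi s a) * (T s a - p s a)).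
  rewrite -ssZ -!ssD; apply: ss_ext => s a; field; lra.
rewrite E.
have h1 := CS (fun s a => L * (pi s a - T s a)) (fun s a => T s a - p s a).
have h2 := CS (fun s a => F T s a - F pi s a) (fun s a => T s a - p s a).
have h3 := hL T pi hT hpi.
have D0 : 0 <= D by exact: norm2_ge0.
have h4 : norm2 (fun s a => F T s a - F pi s a) * D <= G * D.
  by rewrite ler_wpM2r // GE.
rewrite -/G -/D in h1 h2.
have h5 : L * ss (fun s a => (pi s a - L^-1 * F pi s a - T s a) * (p s a - T s a)) <= 0.
  by rewrite pmulr_rle0.
lra.
Qed.


Lemma ratio_bound (R : realType) (S : finType) (d mu : S -> R) (c : R) u :
  (forall s, 0 <= d s) -> (forall s, 0 <= mu s) -> ratio_inf d mu = c%:E ->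
  0 <= c /\ d u <= c * mu u.
Proof.
move=> d0 mu0 hc.
have h := @Order.TotalTheory.le_bigmax _ _ S (-oo)%E
  (fun s => if mu s == 0 then (if d s == 0 then 1%E else +oo%E) else (d s / mu s)%:E) u.
rewrite -/(ratio_inf d mu) hc /= in h.
move: h; case: eqP => [mu0u|/eqP mun0].
  case: eqP => [->|_]; last by [].
  rewrite lee_fin => c1; split; first by apply: le_trans c1.
  by rewrite mu0u mulr0.
rewrite lee_fin => h.
have mup : 0 < mu u by rewrite lt_def mun0 mu0.
split; first by apply: le_trans h; apply: divr_ge0.
by rewrite -ler_pdivrMr.
Qed.

Lemma drho_ge0 (R : realType) (S A : finType) (P : S -> A -> S -> R) (g : R) rho pi :
  (forall s a, is_distr (P s a)) -> is_policy pi -> 0 <= g < 1 -> is_distr rho ->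
  forall u, 0 <= drho P g rho pi u.
Proof.
move=> hP hpi hg hrho u; apply: sumr_ge0 => s _; apply: mulr_ge0.
  exact: (proj1 hrho).
exact: dvis_ge0.
Qed.

Lemma drho_lb (R : realType) (S A : finType) (P : S -> A -> S -> R) (g : R) mu pi :
  (forall s a, is_distr (P s a)) -> is_policy pi -> 0 <= g < 1 -> is_distr mu ->
  forall u, (1 - g) * mu u <= drho P g mu pi u.
Proof.
move=> hP hpi hg hmu u; rewrite /drho (bigD1 u) //=.
apply: (@le_trans _ _ (mu u * dvis P g pi u u)).
  by rewrite mulrC ler_wpM2l ?(proj1 hmu) // dvis_diag.
rewrite lerDl; apply: sumr_ge0 => s _; apply: mulr_ge0; first exact: (proj1 hmu).
exact: dvis_ge0.
Qed.

Theorem lemma5 (R : realType) (S A : finType)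
  (P : S -> A -> S -> R) (Rc : S -> A -> R) (gamma : R)
  (rho mu : S -> R) (L : R) (pistar : S -> A -> R)
  (pi : S -> A -> R) (T : S -> A -> R) :
  (forall s a, is_distr (P s a)) ->
  (forall s a, 0 <= Rc s a <= 1) ->
  0 <= gamma < 1 ->
  is_distr rho -> is_distr mu ->
  0 < L ->
  (forall p p', is_policy p -> is_policy p' ->
     norm2 (fun s a => gradV P Rc gamma mu p s a - gradV P Rc gamma mu p' s a)
       <= L * norm2 (fun s a => p s a - p' s a)) ->
  is_policy pistar ->
  (forall p, is_policy p -> forall s, V P Rc gamma pistar s <= V P Rc gamma p s) ->
  is_policy pi ->
  is_proj_Pi (fun s a => pi s a - L^-1 * gradV P Rc gamma mu pi s a) T ->
  ratio_inf (drho P gamma rho pistar) mu \is a fin_num ->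
  ((Vrho P Rc gamma rho T - Vstar P Rc gamma rho)%:E
     <= ((2 * Num.sqrt (2 * #|S|%:R)) / (1 - gamma))%:E
        * ratio_inf (drho P gamma rho pistar) mu
        * (norm2 (fun s a => L * (pi s a - T s a)))%:E)%E.
Proof.
move=> hP hR hg hrho hmu L0 hL hps hopt hpi hproj hfin.
have hT : is_policy T by case: hproj.
set c := fine (ratio_inf (drho P gamma rho pistar) mu).
have cE : ratio_inf (drho P gamma rho pistar) mu = c%:E by rewrite fineK.
have g1 : 0 < 1 - gamma by case/andP: hg => _ ?; rewrite subr_gt0.
rewrite cE -!EFinM lee_fin.
have Vs : Vrho P Rc gamma rho pistar <= Vstar P Rc gamma rho.
  apply: lb_le_inf.
    by exists (Vrho P Rc gamma rho pistar); exists pistar.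
  move=> y [p hp <-]; apply: ler_sum => s _; apply: ler_wpM2l; first exact: (proj1 hrho).
  exact: hopt.
set gg := fun u => \sum_(a : A) (T u a - pistar u a) * Q P Rc gamma T u a.
have E2 : (1 - gamma) * (Vrho P Rc gamma rho T - Vrho P Rc gamma rho pistar)
    = \sum_(u : S) drho P gamma rho pistar u * gg u.
  rewrite /Vrho -sumrB mulr_sumr.
  transitivity (\sum_(s : S) \sum_(u : S) rho s * (dvis P gamma pistar s u * gg u)).
    apply: eq_bigr => s _; rewrite -mulrBr mulrCA -mulr_sumr; congr (_ * _).
    have := PDL Rc hP hps hT hg s.
    have -> : (1 - gamma) * (V P Rc gamma T s - V P Rc gamma pistar s) =
       - ((1 - gamma) * (V P Rc gamma pistar s - V P Rc gamma T s)) by ring.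
    move=> <-; rewrite -sumrN; apply: eq_bigr => u _.
    rewrite /gg -mulrN -sumrN; congr (_ * _); apply: eq_bigr => a _.
    by rewrite -mulNr opprB.
  rewrite exchange_big; apply: eq_bigr => u _.
  by rewrite /drho mulr_suml; apply: eq_bigr => s _; rewrite mulrA.
pose p := fun u a => if 0 <= gg u then pistar u a else T u a.
have hp : is_policy p by move=> u; rewrite /p; case: (0 <= gg u); [exact: (hps u) | exact: (hT u)].
pose gp := fun u => if 0 <= gg u then gg u else 0.
have gpE : forall u, gp u = \sum_(a : A) (T u a - p u a) * Q P Rc gamma T u a.
  move=> u; rewrite /gp /p; case: ifP => _ //.
  by rewrite big1 // => a _; rewrite subrr mul0r.
have gp0 : forall u, 0 <= gp u by move=> u; rewrite /gp; case: ifP.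
have ggp : forall u, gg u <= gp u.
  by move=> u; rewrite /gp; case: ifP => // /negbT; rewrite -ltNge => /ltW.
have d0 := drho_ge0 hP hps hg hrho.
have mu0 : forall s, 0 <= mu s by exact: (proj1 hmu).
have c0 : forall u, 0 <= c /\ drho P gamma rho pistar u <= c * mu u.
  by move=> u; apply: ratio_bound.
have S4 : \sum_(u : S) drho P gamma rho pistar u * gg u <=
    c * (1 - gamma)^-1 * \sum_(u : S) drho P gamma mu T u * gp u.
  rewrite mulr_sumr; apply: ler_sum => u _.
  have [cpos hd] := c0 u.
  have hlb := drho_lb hP hT hg hmu u.
  apply: (@le_trans _ _ (drho P gamma rho pistar u * gp u)).
    by rewrite ler_wpM2l.
  apply: (@le_trans _ _ (c * mu u * gp u)).
    by rewrite ler_wpM2r.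
  rewrite -!mulrA ler_wpM2l // mulrA ler_wpM2r //.
  by rewrite ler_pdivlMl // mulrC.
have S5 : \sum_(u : S) drho P gamma mu T u * gp u =
    (1 - gamma) * ss (fun s a => gradV P Rc gamma mu T s a * (T s a - p s a)).
  rewrite /ss mulr_sumr; apply: eq_bigr => u _.
  rewrite gpE mulr_sumr mulr_sumr; apply: eq_bigr => a _.
  rewrite /gradV; field; lra.
have S6 := grad_bound L0 hL hpi hp hproj.
have S7 := diam hT hp.
set G := norm2 (fun s a => L * (pi s a - T s a)) in S6 *.
set Dm := norm2 (fun s a => T s a - p s a) in S6 S7.
set K := Num.sqrt (2 * #|S|%:R) in S7 *.
set Z := ss _ in S5 S6.
have G0 : 0 <= G by exact: norm2_ge0.
have cpos : 0 <= c.
  have H : \sum_(s : S) rho s <> 0 by rewrite (proj2 hrho); apply/eqP; exact: oner_neq0.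
  have [u _] := psumr_neq0P (fun s _ => proj1 hrho s) H.
  by case: (c0 u).
have Z1 : Z <= 2 * G * K.
  apply: le_trans S6 _; rewrite ler_wpM2l // mulr_ge0 //.
have main : (1 - gamma) * (Vrho P Rc gamma rho T - Vrho P Rc gamma rho pistar) <= c * 2 * G * K.
  rewrite E2; apply: le_trans S4 _; rewrite S5.
  rewrite mulrA -(mulrA c) mulVf ?gt_eqF // mulr1.
  by rewrite -!mulrA ler_wpM2l // !mulrA.
have : Vrho P Rc gamma rho T - Vrho P Rc gamma rho pistar <= c * 2 * G * K / (1 - gamma).
  by rewrite ler_pdivlMr // mulrC.
move=> h.
apply: (@le_trans _ _ (Vrho P Rc gamma rho T - Vrho P Rc gamma rho pistar)).
  by rewrite lerB.
apply: le_trans h _.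
rewrite le_eqVlt; apply/orP; left; apply/eqP; field; lra.
Qed.
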